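(* Let $n$ be a positive integer. Then $\mathsf{NAADT}(\mathsf{OMB}_n) = n$. Moreover, $\mathrm{spar}(\mathsf{OMB}_n) = n$ if $n$ is even, and $\mathrm{spar}(\mathsf{OMB}_n) = n+1$ if $n$ is odd.
   Context: $\mathsf{OMB}_n:\{0,1\}^n\to\{0,1\}$ is defined by $\mathsf{OMB}_n(x)=1$ if $\max\{i\in[n]:x_i=0\}$ is odd and $0$ otherwise, with $\mathsf{OMB}_n(1^n)=0$. $\mathsf{AND}_S(x)=\prod_{i\in S}x_i$. $\mathsf{NAADT}(f)$ is the minimum $k$ for which there exist $S_1,\dots,S_k\subseteq[n]$ such that $f(x)$ is determined by $\mathsf{AND}_{S_1}(x),\dots,\mathsf{AND}_{S_k}(x)$ for all $x$. $\mathrm{spar}(f)$ is the number of nonzero coefficients $\widetilde f(S)$ in the unique expansion $f=\sum_{S\subseteq[n]}\widetilde f(S)\mathsf{AND}_S$ with real coefficients. *)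

(* Defs.v *)
From HB Require Import structures.
From mathcomp Require Import all_boot all_order all_algebra.
From mathcomp Require Import reals.
Set Implicit Arguments. Unset Strict Implicit. Unset Printing Implicit Defensive.
Import Order.TTheory GRing.Theory Num.Theory.

(* Inputs x in {0,1}^n are finite functions 'I_n -> bool; coordinate i : 'I_n
   stands for the paper's coordinate i+1 in [n]; true = 1, false = 0. *)
Notation cube n := {ffun 'I_n -> bool}.

(* max{ i in [n] : x_i = 0 } (1-based), with value 0 when x = 1^n. *)
Definition last_zero n (x : cube n) : nat := \max_(i : 'I_n | ~~ x i) i.+1.

Definition OMB n (x : cube n) : bool := odd (last_zero x).

Definition ANDS n (S : {set 'I_n}) (x : cube n) : bool := [forall i in S, x i].

Definition determined_by n (f : cube n -> bool) k (S : {ffun 'I_k -> {set 'I_n}}) : bool :=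
  [forall x : cube n, forall y : cube n,
     [forall j : 'I_k, ANDS (S j) x == ANDS (S j) y] ==> (f x == f y)].

Definition naadt_ok n (f : cube n -> bool) (k : nat) : bool :=
  [exists S : {ffun 'I_k -> {set 'I_n}}, determined_by f S].

Lemma naadt_ok_exists n (f : cube n -> bool) : exists k, naadt_ok f k.
Proof.
exists n; apply/existsP; exists [ffun i => [set i]].
apply/forallP => x; apply/forallP => y; apply/implyP => /forallP H.
have -> : x = y.
  apply/ffunP => i; have /eqP := H i; rewrite /ANDS !ffunE.
  have E z : [forall j in [set i], z j] = z i.
    apply/forallP/idP => [/(_ i)|zi j]; first by rewrite in_set1 eqxx.
    by apply/implyP; rewrite in_set1 => /eqP ->.
  by rewrite !E.
by [].
Qed.

Definition NAADT n (f : cube n -> bool) : nat := ex_minn (naadt_ok_exists f).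

Definition AND_expansion (R : realType) n (f : cube n -> bool)
    (c : {ffun {set 'I_n} -> R}) : Prop :=
  forall x : cube n, ((f x)%:R = \sum_(S : {set 'I_n}) c S * (ANDS S x)%:R)%R.

(* spar(f) = k : the (unique) AND-expansion of f exists, and it has exactly k
   nonzero coefficients (stated for every expansion, so uniqueness is not
   assumed). *)
Definition spar_is (R : realType) n (f : cube n -> bool) (k : nat) : Prop :=
  (exists c : {ffun {set 'I_n} -> R}, AND_expansion f c) /\
  (forall c : {ffun {set 'I_n} -> R}, AND_expansion f c ->
     #|[set S : {set 'I_n} | c S != 0%R]| = k).

(* Main.v *)
Require Import Defs.
From HB Require Import structures.
From mathcomp Require Import all_boot all_order all_algebra.
From mathcomp Require Import reals.
Set Implicit Arguments. Unset Strict Implicit. Unset Printing Implicit Defensive.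
Import Order.TTheory GRing.Theory Num.Theory.

Lemma last_zero_z n j : j <= n -> last_zero [ffun i : 'I_n => j <= i] = j.
Proof.
move=> hj; apply/eqP; rewrite eqn_leq; apply/andP; split.
  by apply/bigmax_leqP => i; rewrite ffunE -ltnNge.
case: j hj => [|j] hj //.
by apply: (leq_bigmax_cond (Ordinal hj)); rewrite ffunE /= ltnn.
Qed.

Lemma not_det n k (S : {ffun 'I_k -> {set 'I_n}}) : k < n -> ~~ determined_by (@OMB n) S.
Proof.
move=> kn.
have hn : 0 < n by apply: leq_ltn_trans kn.
pose isMin (p : 'I_n) (A : {set 'I_n}) := (p \in A) && [forall q in A, p <= q].
pose P := [set p : 'I_n | [exists i, isMin p (S i)]].
pose h (i : 'I_k) := odflt (Ordinal hn) [pick p | isMin p (S i)].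
have PS : P \subset h @: [set: 'I_k].
  apply/subsetP => p; rewrite inE => /existsP [i Hi].
  apply/imsetP; exists i; first by rewrite inE.
  rewrite /h; case: pickP => [p' Hp'|/(_ p)]; last by rewrite Hi.
  move: Hi Hp' => /andP [pS /forallP Hp] /andP [p'S /forallP Hp'] /=.
  apply/val_inj/eqP; rewrite eqn_leq.
  by rewrite (implyP (Hp p') p'S) (implyP (Hp' p) pS).
have cP : #|P| < n.
  apply: leq_ltn_trans kn; apply: leq_trans (subset_leq_card PS) _.
  by apply: leq_trans (leq_imset_card _ _) _; rewrite cardsT card_ord.
have [p pP] : exists p, p \notin P.
  case: (pickP (fun p => p \notin P)) => [p Hp|H]; first by exists p.
  have := cardsC P; rewrite (@eq_card0 _ (~: P)) ?addn0 ?card_ord; last by move=> q; rewrite inE H.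
  move=> E.
  by move: cP; rewrite E ltnn.
apply/negP => /forallP/(_ [ffun i : 'I_n => p <= i])/forallP/(_ [ffun i : 'I_n => p < i]).
move/implyP => H.
have : OMB [ffun i : 'I_n => p <= i] == OMB [ffun i : 'I_n => p < i].
  apply: H; apply/forallP => j; apply/eqP; rewrite /ANDS.
  case pSj: (p \in S j).
  - have -> : [forall i in S j, [ffun i0 : 'I_n => p < i0] i] = false.
      by apply/negbTE/negP => /forallP/(_ p); rewrite pSj ffunE ltnn.
    apply/negbTE/negP => /forallP Hf; move: pP; rewrite inE; apply/negP/negPn.
    apply/existsP; exists j; rewrite /isMin pSj /=; apply/forallP => q.
    by have := Hf q; rewrite ffunE.
  - apply: eq_forallb => i; rewrite !ffunE; rewrite /(_ ==> _); case iS: (i \in S j) => //=.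
    rewrite leq_eqVlt; case: eqP => // /val_inj E; by move: pSj; rewrite E iS.
rewrite /OMB !last_zero_z //; try exact: ltnW.
by rewrite oddS; case: (odd p).
Qed.

Lemma exp_zero (R : realType) n (d : {ffun {set 'I_n} -> R}) :
  (forall x : cube n, (\sum_(S : {set 'I_n}) d S * (ANDS S x)%:R = 0)%R) ->
  forall S, d S = 0%R.
Proof.
move=> H.
have AS (S T : {set 'I_n}) : ANDS T [ffun i => i \in S] = (T \subset S).
  rewrite /ANDS; apply/idP/idP.
    move/forallP => H'; apply/subsetP => i iT.
    by have := H' i; rewrite iT ffunE.
  move=> sub; apply/forallP => i; rewrite ffunE; apply/implyP => iT.
  exact: (subsetP sub).
have key (S : {set 'I_n}) : (forall T : {set 'I_n}, T \proper S -> d T = 0%R) -> d S = 0%R.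
  move=> HT; have := H [ffun i => i \in S].
  rewrite (bigD1 S) //= big1 ?addr0; first by rewrite AS subxx mulr1.
  move=> T TneS; rewrite AS; case sub: (T \subset S); last by rewrite mulr0.
  by rewrite HT ?mul0r // properEneq TneS sub.
suff: forall m (S : {set 'I_n}), #|S| <= m -> d S = 0%R by move=> Hm S; apply: (Hm #|S|).
elim=> [|m IH] S hS; apply: key => T /proper_card lt.
  by move: (leq_trans lt hS).
by apply: IH; rewrite -ltnS; apply: leq_trans lt hS.
Qed.

Lemma exp_uniq (R : realType) n (f : cube n -> bool) (c1 c2 : {ffun {set 'I_n} -> R}) :
  AND_expansion f c1 -> AND_expansion f c2 -> c1 = c2.
Proof.
move=> h1 h2; apply/ffunP => S; apply/eqP; rewrite -subr_eq0; apply/eqP.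
have Z : forall S', [ffun S => (c1 S - c2 S)%R] S' = 0%R.
  apply: exp_zero => x.
  under eq_bigr do rewrite ffunE mulrBl.
  by rewrite sumrB -h1 -h2 subrr.
by have := Z S; rewrite ffunE.
Qed.

Definition Tset n (m : nat) : {set 'I_n} := [set i : 'I_n | m <= i].
Definition coef (R : realType) n (m : nat) : R :=
  if odd m then 1%R else if m < n then (-1)%R else 0%R.
Definition c0 (R : realType) n : {ffun {set 'I_n} -> R} :=
  [ffun S => \sum_(m < n.+1 | S == Tset n m) coef R n m]%R.

Lemma ANDS_T n (x : cube n) m : ANDS (Tset n m) x = (last_zero x <= m).
Proof.
rewrite /ANDS; apply/forallP/bigmax_leqP => H i.
  move=> xi; rewrite leqNgt; apply/negP => lt; rewrite ltnS in lt.
  by have := H i; rewrite inE lt /= (negbTE xi).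
apply/implyP; rewrite inE => mi; apply/negPn/negP => xi.
by have := H i xi; rewrite leqNgt ltnS mi.
Qed.

Lemma last_zero_le n (x : cube n) : last_zero x <= n.
Proof. by apply/bigmax_leqP => i _; exact: ltn_ord. Qed.

Lemma coef_suffix (R : realType) n k : k <= n ->
  (\sum_(n - k <= m < n.+1) coef R n m = (odd (n - k))%:R)%R.
Proof.
elim: k => [|k IH] hk.
  rewrite subn0 big_nat1 /coef ltnn; case: (odd n).
    by rewrite mulr1n.
  by rewrite mulr0n.
have lt : n - k.+1 < n.+1 by rewrite ltnS leq_subr.
rewrite big_ltn; last exact: lt.
have e1 : (n - k.+1).+1 = n - k by rewrite subnSK.
rewrite e1 (IH (ltnW hk)) /coef.
have -> : n - k.+1 < n by move: (leq_subr k n); rewrite -e1.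
have -> : odd (n - k) = ~~ odd (n - k.+1) by rewrite -e1 oddS.
case: (odd (n - k.+1)).
  by rewrite mulr0n addr0 mulr1n.
by rewrite mulr1n mulr0n addNr.
Qed.

Lemma coef_sum (R : realType) n L : L <= n ->
  (\sum_(m < n.+1) coef R n m * (L <= m)%:R = (odd L)%:R)%R.
Proof.
move=> hL.
rewrite -(big_mkord xpredT (fun m => coef R n m * (L <= m)%:R)%R).
rewrite (@big_cat_nat _ _ _ L 0 n.+1 _ _ (leq0n L) (leqW hL)).
rewrite big_nat_cond big1 ?add0r; last first.
  by move=> m /andP[/andP[_ mL] _]; rewrite leqNgt mL mulr0.
rewrite (@eq_big_nat _ _ _ _ _ _ (fun m => coef R n m)); last first.
  by move=> m /andP[Lm _]; rewrite Lm mulr1.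
have := coef_suffix R (leq_subr L n); rewrite (subKn hL) => <-.
exact: add0r.
Qed.

Lemma c0_exp (R : realType) n : AND_expansion (@OMB n) (c0 R n).
Proof.
move=> x.
under eq_bigr do rewrite ffunE big_mkcond mulr_suml.
rewrite exchange_big.
under eq_bigr => m _.
  rewrite (bigD1 (Tset n m)); last by [].
  rewrite eqxx big1 ?addr0; last first.
    by move=> S /negbTE ->; rewrite mul0r.
  rewrite ANDS_T.
over.
rewrite /OMB -(coef_sum R (last_zero_le x)); apply: eq_bigr => m _; symmetry; exact: addr0.
Qed.

Lemma Tneq n m1 m2 : m1 < m2 -> m1 < n -> Tset n m1 != Tset n m2.
Proof.
move=> lt h; apply/eqP => E.
have : (Ordinal h : 'I_n) \in Tset n m1 by rewrite inE.
by rewrite E inE /= leqNgt lt.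
Qed.

Lemma Tinj n (m1 m2 : 'I_n.+1) : Tset n m1 = Tset n m2 -> m1 = m2.
Proof.
move=> E; apply/val_inj; case: (ltngtP m1 m2) => // lt.
  have h2 : (m2 <= n)%N by rewrite -ltnS ltn_ord.
  by move: (Tneq lt (leq_trans lt h2)); rewrite E eqxx.
have h2 : (m1 <= n)%N by rewrite -ltnS ltn_ord.
by move: (Tneq lt (leq_trans lt h2)); rewrite E eqxx.
Qed.

Lemma c0T (R : realType) n (m : 'I_n.+1) : c0 R n (Tset n m) = coef R n m.
Proof.
rewrite ffunE (big_pred1 m) // => m' /=.
by apply/eqP/eqP => [/Tinj ->|->].
Qed.

Lemma c0_card (R : realType) n :
  #|[set S | c0 R n S != 0%R]| = if odd n then n.+1 else n.
Proof.
have -> : [set S | c0 R n S != 0%R] =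
    (fun m : 'I_n.+1 => Tset n m) @: [set m : 'I_n.+1 | coef R n m != 0%R].
  apply/setP => S; rewrite inE; apply/idP/imsetP.
    case: (pickP (fun m : 'I_n.+1 => S == Tset n m)) => [m /eqP ->|H].
      by rewrite c0T => hm; exists m; rewrite ?inE.
    by rewrite ffunE big_pred0 ?eqxx.
  by move=> [m]; rewrite inE => hm ->; rewrite c0T.
rewrite card_imset; last by move=> a b /Tinj.
have cf (m : 'I_n.+1) : (coef R n m != 0%R) = (m < n) || odd m.
  rewrite /coef; case: (odd m); case: ltnP => _;
    by rewrite ?orbT ?orbF ?oppr_eq0 ?oner_eq0 ?eqxx.
case on: (odd n).
  rewrite -[RHS](card_ord n.+1) -cardsT; apply: eq_card => m.
  rewrite !inE cf; case: ltngtP => //=; first by move: (ltn_ord m); rewrite ltnS leqNgt => /negbTE ->.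
  by move=> ->.
rewrite -[n in RHS]/(n.+1.-1) -[n.+1 in RHS](card_ord n.+1) -(cardsC1 (@ord_max n)).
apply: eq_card => m; rewrite !inE cf -(inj_eq val_inj) /=.
case: ltngtP => //=; first by move: (ltn_ord m); rewrite ltnS leqNgt => /negbTE ->.
by move=> ->; rewrite on.
Qed.

Lemma naadt_ok_n n : naadt_ok (@OMB n) n.
Proof.
apply/existsP; exists [ffun i => [set i]].
apply/forallP => x; apply/forallP => y; apply/implyP => /forallP H.
have -> : x = y.
  apply/ffunP => i; have /eqP := H i; rewrite /ANDS !ffunE.
  have E z : [forall j in [set i], z j] = z i.
    apply/forallP/idP => [/(_ i)|zi j]; first by rewrite in_set1 eqxx.
    by apply/implyP; rewrite in_set1 => /eqP ->.
  by rewrite !E.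
by [].
Qed.

Theorem claim4p6 (n : nat) (hn : 0 < n) :
  NAADT (@OMB n) = n /\
  (forall R : realType, spar_is R (@OMB n) (if odd n then n.+1 else n)).
Proof.
split.
  rewrite /NAADT; case: ex_minnP => m okm minm.
  apply/eqP; rewrite eqn_leq; apply/andP; split.
    exact: minm (naadt_ok_n n).
  rewrite leqNgt; apply/negP => lt; move: okm => /existsP [S]; apply/negP.
  exact: not_det.
move=> R; split; first by exists (c0 R n); exact: (@c0_exp R n).
move=> c hc; rewrite (exp_uniq hc (@c0_exp R n)); exact: c0_card.
Qed.
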